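(* Let $F(X;\theta)=f_L\circ\cdots\circ f_1(X)$ be a convolutional network with parameters $\theta=\{W^1,\dots,W^L,B^1,\dots,B^L\}$, and let $\omega_t=f_L\circ\cdots\circ f_t$ and $\alpha_t=f_t\circ\cdots\circ f_1$ for $t=1,\dots,L$, with $\omega_{L+1}$ and $\alpha_0$ the identity maps. Let $V,X\in\mathbb{R}^{n_1\times\ell_1}\otimes\mathbb{R}^{m_1}$, $t\in\{1,\dots,L\}$, and $X^t=\alpha_{t-1}(X)$. Then for a parameter $\theta^t\in\{W^t,B^t\}$, $$\big(\nabla_{\theta^t}\mathrm{D}F(X;\theta)\llcorner V\big)^*=\nabla^*_{\theta^t}f_t(X^t)\cdot\Big((\mathrm{D}\alpha_t(X)\cdot V)\lrcorner\mathrm{D}^2\omega_{t+1}(X^{t+1})\Big)^*+\Big((\mathrm{D}\alpha_{t-1}(X)\cdot V)\lrcorner\mathrm{D}\nabla_{\theta^t}f_t(X^t)\Big)^*\cdot\mathrm{D}^*\omega_{t+1}(X^{t+1}).$$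
   Context: All spaces are finite-dimensional real inner product spaces with tensor products carrying the induced inner product; $L^*$ denotes the adjoint. For a map $g(x;\theta)$: $\mathrm{D}g$ is the derivative in the state $x$ and $\nabla_\theta g$ the derivative in the parameter $\theta$ (both linear maps), $\mathrm{D}^*g,\nabla^*_\theta g$ their adjoints; $\mathrm{D}^2g(x)$ is the bilinear map $(e,\bar e)\mapsto\frac{d}{dt}\mathrm{D}g(x+te)\cdot\bar e|_{t=0}$; $\mathrm{D}\nabla_\theta g(x;\theta)$ is the bilinear map $(e,u)\mapsto\frac{d}{dt}\nabla_\theta g(x+te;\theta)\cdot u|_{t=0}$; $\nabla_\theta\mathrm{D}g(x;\theta)$ is the bilinear map $(u,e)\mapsto\frac{d}{dt}\mathrm{D}g(x;\theta+tu)\cdot e|_{t=0}$. For a bilinear $B(\cdot,\cdot)$, $y\lrcorner B$ is the linear map $e\mapsto B(y,e)$ and $B\llcorner y$ is $e\mapsto B(e,y)$. The network: for $t=1,\dots,L$, $f_t:\mathbb{R}^{n_t\times\ell_t}\otimes\mathbb{R}^{m_t}\to\mathbb{R}^{n_{t+1}\times\ell_{t+1}}\otimes\mathbb{R}^{m_{t+1}}$ is $f_t(X^t)=\Psi_t\big(S_t(C^t(W^t,X^t)+B^t)\big)$ with parameters $W^t\in\mathbb{R}^{p_t\times q_t}\otimes\mathbb{R}^{m_{t+1}}$, $B^t\in\mathbb{R}^{\bar n_t\times\bar\ell_t}\otimes\mathbb{R}^{m_{t+1}}$, where (with orthonormal bases $\{e_i\}$ of $\mathbb{R}^{m_t}$,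 $\{\tilde e_a\}$ of $\mathbb{R}^{m_{t+1}}$, $\{E_{jk}\}$ of $\mathbb{R}^{n_t\times\ell_t}$, $\{\bar E_{jk}\}$ of $\mathbb{R}^{\bar n_t\times\bar\ell_t}$, $\{\tilde E_{rs}\}$ of $\mathbb{R}^{p_t\times q_t}$): $C^t(W,X)=\sum_aC_a(W,X)\otimes\tilde e_a$ with $C_a(W,X)=\sum_{j=1}^{\bar n_t}\sum_{k=1}^{\bar\ell_t}\langle W_a,\Phi_{A_a}(\mathcal{K}_{1+(j-1)\Delta,1+(k-1)\Delta}(X))\rangle\bar E_{jk}$ for $W=\sum_aW_a\otimes\tilde e_a$, fixed $A_a\in\mathbb{R}^{m_t}$ and stride $\Delta\ge1$; $\mathcal{K}_{jk}(\sum_iX_i\otimes e_i)=\sum_i\kappa_{jk}(X_i)\otimes e_i$, $\kappa_{jk}(Q)=\sum_{r,s}\langle Q,E_{j+r-1,k+s-1}\rangle\tilde E_{rs}$ (dimensions such that crops are defined); $\Phi_v(\sum_iU_i\otimes e_i)=\sum_iv_iU_i$ for $v=\sum_iv_ie_i$; $S_t(\sum_aY_a\otimes\tilde e_a)=\sum_a\sigma(Y_a)\otimes\tilde e_a$ with $\sigma(Y)=\sum_{j,k}\bar\sigma_t(\langle Y,\bar E_{jk}\rangle)\bar E_{jk}$ for a twice continuously differentiable $\bar\sigma_t:\mathbb{R}\to\mathbb{R}$; and $\Psi_t(\sum_aY_a\otimes\tilde e_a)=\sum_a\psi_t(Y_a)\otimes\tilde e_a$ for a linear $\psi_t:\mathbb{R}^{\bar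 n_t\times\bar\ell_t}\to\mathbb{R}^{n_{t+1}\times\ell_{t+1}}$. In the claim, $\mathrm{D}F(X;\theta)$ is the derivative of $F$ in $X$, and $f_t$, $\omega_t$, $\alpha_t$ depend on the parameters, which are held fixed except $\theta^t$ where differentiated. *)

(* Defs.v *)
From HB Require Import structures.
From mathcomp Require Import all_boot all_order all_algebra.
From mathcomp Require Import all_classical all_reals all_analysis.
Set Implicit Arguments.
Unset Strict Implicit.
Unset Printing Implicit Defensive.
Import Order.TTheory GRing.Theory Num.Theory.
Import numFieldNormedType.Exports.
Local Open Scope ring_scope.

(* The tensor space R^{a x b} (x) R^c is represented by the matrix type       *)
(*   tens a b c := 'M[R]_(c, a * b)                                            *)
(* whose i-th row is mxvec X_i, for X = \sum_i X_i (x) e_i (standard          *)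
(* orthonormal bases, 0-indexed).  The Frobenius inner product of this matrix  *)
(* type is exactly the induced inner product of the tensor product.           *)
(* Directional derivatives are MathComp-Analysis' 'D_v f x                    *)
(* (= d/dt f(x + t v) at t = 0).                                               *)

Section Tensors.
Context {R : realType}.

Definition tens (a b c : nat) := 'M[R]_(c, a * b).

Definition chan a b c (X : tens a b c) (i : 'I_c) : 'M[R]_(a, b) :=
  vec_mx (row i X).

Definition mktens a b c (F : 'I_c -> 'M[R]_(a, b)) : tens a b c :=
  \matrix_(i < c, j < a * b) mxvec (F i) 0 j.

Definition frob a b (M N : 'M[R]_(a, b)) : R :=
  \sum_(i < a) \sum_(j < b) M i j * N i j.

Definition adj a b c d (Lm : 'M[R]_(a, b) -> 'M[R]_(c, d)) :
    'M[R]_(c, d) -> 'M[R]_(a, b) :=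
  fun y => \matrix_(i < a, j < b) frob y (Lm (delta_mx i j)).

(* entry (i, j) (0-indexed) of Q; never used out of range under the          *)
(* "crops are defined" hypotheses *)
Definition mxat a b (Q : 'M[R]_(a, b)) (i j : nat) : R :=
  match (insub i : option 'I_a), (insub j : option 'I_b) with
  | Some i', Some j' => Q i' j'
  | _, _ => 0
  end.

(* kappa_{jk}: the p x q crop of Q with top-left corner at 0-indexed (j0,k0):*)
(* kappa_{jk}(Q) = \sum_{r,s} <Q, E_{j+r-1,k+s-1}> E~_{rs}, j0 = j-1, k0 = k-1 *)
Definition kappa p q a b (j0 k0 : nat) (Q : 'M[R]_(a, b)) : 'M[R]_(p, q) :=
  \matrix_(r < p, s < q) mxat Q (j0 + r) (k0 + s).

Definition Kop p q a b c (j0 k0 : nat) (X : tens a b c) : tens p q c :=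
  mktens (fun i => kappa p q j0 k0 (chan X i)).

Definition Phi p q c (v : 'rV[R]_c) (U : tens p q c) : 'M[R]_(p, q) :=
  \sum_(i < c) v 0 i *: chan U i.

(* row a of A is the vector A_a \in R^{m_t}.                                   *)
Definition conv a b c p q nb lb c' (D : nat) (A : 'M[R]_(c', c))
    (W : tens p q c') (X : tens a b c) : tens nb lb c' :=
  mktens (fun a' => \matrix_(j < nb, k < lb)
            frob (chan W a') (Phi (row a' A) (Kop p q (j * D) (k * D) X))).

Definition Sact a b c (s : R -> R) (Y : tens a b c) : tens a b c :=
  mktens (fun i => map_mx s (chan Y i)).

Definition Psiact a b a' b' c (psi : 'M[R]_(a, b) -> 'M[R]_(a', b'))
    (Y : tens a b c) : tens a' b' c :=
  mktens (fun i => psi (chan Y i)).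

Definition C2 (s : R -> R) : Prop :=
  [/\ forall x : R, derivable s x 1,
      forall x : R, derivable (derive1 s) x 1
    & continuous (derive1 (derive1 s))].

End Tensors.

(* Architecture: all layer-indexed data, layer t = 1..L                       *)
(*  n_ t, l_ t, m_ t : input dims of f_t (t = 1..L+1)                           *)
(*  p_ t, q_ t : filter dims;  nb_ t, lb_ t : \bar n_t, \bar l_t               *)
(*  stride t : Delta (of layer t);  Avec t : rows A_a;  sig t : \bar sigma_t   *)
Record arch (R : realType) := Arch {
  n_ : nat -> nat; l_ : nat -> nat; m_ : nat -> nat;
  p_ : nat -> nat; q_ : nat -> nat; nb_ : nat -> nat; lb_ : nat -> nat;
  stride : nat -> nat;
  Avec : forall t, 'M[R]_(m_ t.+1, m_ t);
  sig : nat -> R -> R;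
  psi : forall t, {linear 'M[R]_(nb_ t, lb_ t) -> 'M[R]_(n_ t.+1, l_ t.+1)}
}.

Section Network.
Context {R : realType} (ar : arch R).

Definition arch_wf (L : nat) : Prop :=
  forall t : nat, (1 <= t <= L)%N ->
  [/\ (0 < stride ar t)%N,
      (forall j : 'I_(nb_ ar t), j * stride ar t + p_ ar t <= n_ ar t)%N,
      (forall k : 'I_(lb_ ar t), k * stride ar t + q_ ar t <= l_ ar t)%N
    & C2 (sig ar t)].

Definition St (t : nat) := @tens R (n_ ar t) (l_ ar t) (m_ ar t).
Definition Wsp (t : nat) := @tens R (p_ ar t) (q_ ar t) (m_ ar t.+1).
Definition Bsp (t : nat) := @tens R (nb_ ar t) (lb_ ar t) (m_ ar t.+1).
Definition Wfam := forall t, Wsp t.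
Definition Bfam := forall t, Bsp t.

Definition layer (t : nat) (w : Wsp t) (b : Bsp t) (X : St t) : St t.+1 :=
  Psiact (psi ar t)
    (Sact (sig ar t) (conv (nb_ ar t) (lb_ ar t) (stride ar t) (Avec ar t) w X + b)).

Section Params.
Variables (W : Wfam) (B : Bfam).

(* alphaTo t = alpha_{t-1} = f_{t-1} o ... o f_1 for t >= 1 (alphaTo 1 = id); *)
(* alphaTo 0 is junk and never used. *)
Fixpoint alphaTo (t : nat) : St 1 -> St t :=
  match t return St 1 -> St t with
  | 0 => fun _ => 0
  | u.+1 =>
      match u return (St 1 -> St u) -> St 1 -> St u.+1 with
      | 0 => fun _ x => x
      | v.+1 => fun rec x => layer (W v.+1) (B v.+1) (rec x)
      end (alphaTo u)
  end.

Fixpoint omk (k t : nat) : St t -> St (k + t)%N :=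
  match k return St t -> St (k + t)%N with
  | 0 => fun x => x
  | k'.+1 => fun x => layer (W (k' + t)%N) (B (k' + t)%N) (@omk k' t x)
  end.

Definition castSt (i j : nat) (e : i = j) (x : St i) : St j :=
  ecast k (St k) e x.

Definition omega (L t : nat) (ht : (t <= L.+1)%N) : St t -> St L.+1 :=
  fun x => castSt (subnK ht) (@omk (L.+1 - t)%N t x).

Definition netF (L : nat) : St 1 -> St L.+1 := alphaTo L.+1.

End Params.

Definition updW (W : Wfam) (t : nat) (w : Wsp t) : Wfam :=
  @dfwith nat Wsp W t w.
Definition updB (B : Bfam) (t : nat) (b : Bsp t) : Bfam :=
  @dfwith nat Bsp B t b.

End Network.

(* Main.v *)
Require Import Defs.
From HB Require Import structures.
From mathcomp Require Import all_boot all_order all_algebra.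
From mathcomp Require Import all_classical all_reals all_analysis.
From mathcomp Require Import ring lra zify.
Import Order.TTheory GRing.Theory Num.Theory.
Import numFieldNormedType.Exports.
Local Open Scope ring_scope.


Section Calc.
Variable R : realType.

Lemma derive_ext (V1 V2 W : normedModType R) (f : V1 -> W) (g : V2 -> W) a v b w :
  (forall h : R, f (h *: v + a) = g (h *: w + b)) -> 'D_v f a = 'D_w g b.
Proof.
move=> H; rewrite /derive.
have Ha : f a = g b by have := H 0; rewrite !scale0r !add0r.
have -> : (fun h : R => h^-1 *: ((f \o shift a) (h *: v) - f a)) =
  (fun h => h^-1 *: ((g \o shift b) (h *: w) - g b)).
  by apply/funext => h /=; rewrite Ha H.
by [].
Qed.

Lemma differentiable_big (V W : normedModType R) (I : Type) (r : seq I)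
  (P : pred I) (F : I -> V -> W) x :
  (forall i, P i -> differentiable (F i) x) ->
  differentiable (fun y => \sum_(i <- r | P i) F i y) x.
Proof.
move=> H; elim: r => [|i r IH].
  rewrite (_ : (fun y => _) = cst 0); first exact: differentiable_cst.
  by apply/funext => y; rewrite big_nil.
case: (boolP (P i)) => Pi.
  rewrite (_ : (fun y => _) = F i + (fun y => \sum_(j <- r | P j) F j y)).
    exact: differentiableD (H i Pi) IH.
  by apply/funext => y; rewrite big_cons Pi.
rewrite (_ : (fun y => _) = (fun y => \sum_(j <- r | P j) F j y)) //.
by apply/funext => y; rewrite big_cons (negbTE Pi).
Qed.

Lemma derive_big (V W : normedModType R) (I : Type) (r : seq I)
  (P : pred I) (F : I -> V -> W) x v :
  (forall i, P i -> differentiable (F i) x) ->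
  'D_v (fun y => \sum_(i <- r | P i) F i y) x = \sum_(i <- r | P i) 'D_v (F i) x.
Proof.
move=> H; elim: r => [|i r IH].
  rewrite big_nil (_ : (fun y => _) = cst 0); first exact: derive_cst.
  by apply/funext => y; rewrite big_nil.
case: (boolP (P i)) => Pi.
  rewrite (_ : (fun y => _) = F i + (fun y => \sum_(j <- r | P j) F j y)).
    rewrite deriveD ?big_cons ?Pi ?IH //; apply: diff_derivable; first exact: H.
    exact: differentiable_big.
  by apply/funext => y; rewrite big_cons Pi.
rewrite big_cons (negbTE Pi) -IH.
rewrite (_ : (fun y => _) = (fun y => \sum_(j <- r | P j) F j y)) //.
by apply/funext => y; rewrite big_cons (negbTE Pi).
Qed.

Lemma derive_lin (V W : normedModType R) (f : {linear V -> W}) x v :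
  continuous f -> 'D_v f x = f v.
Proof.
by move=> c; rewrite deriveE ?diff_lin //; exact: linear_differentiable.
Qed.

Definition coordL m n (i : 'I_m) (j : 'I_n) : {linear 'M[R]_(m, n) -> R}.
by exists (fun N : 'M[R]_(_, _) => N i j); do 2![eexists]; do ?[constructor];
     rewrite ?mxE// => ? *; rewrite ?mxE//; move=> ?; rewrite !mxE.
Defined.
Arguments coordL {m n}.

Lemma coordLE m n (i : 'I_m) (j : 'I_n) (N : 'M[R]_(m, n)) : coordL i j N = N i j.
Proof. by []. Qed.

Lemma coordL_cont m n (i : 'I_m) (j : 'I_n) : continuous (@coordL m n i j).
Proof. exact: coord_continuous. Qed.

Lemma derive_coord m n (M b : 'M[R]_(m, n)) (i : 'I_m) (j : 'I_n) :
  'D_b (fun N : 'M[R]_(m, n) => N i j) M = b i j.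
Proof. by rewrite (_ : (fun N : 'M[R]_(m, n) => N i j) = coordL i j) // derive_lin //; exact: coordL_cont. Qed.

Lemma derive_mx_coord (V : normedModType R) m n (f : V -> 'M[R]_(m, n)) x v i j :
  differentiable f x -> 'D_v f x i j = 'D_v (fun y => f y i j) x.
Proof.
move=> df.
have dc : differentiable (coordL i j) (f x) by apply: linear_differentiable; exact: coordL_cont.
rewrite (_ : (fun y => f y i j) = coordL i j \o f) //.
rewrite [RHS]deriveE; last exact: differentiable_comp.
rewrite diff_comp // diff_lin; last exact: coordL_cont.
by rewrite /= deriveE.
Qed.

Lemma differentiable_mx (V : normedModType R) m n (f : V -> 'M[R]_(m, n)) x :
  (forall i j, differentiable (fun y => f y i j) x) -> differentiable f x.
Proof.
move=> H.
rewrite (_ : f = fun y => \sum_i \sum_j f y i j *: delta_mx i j); last first.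
  by apply/funext => y; rewrite [LHS]matrix_sum_delta.
apply: differentiable_big => i _.
apply: differentiable_big => j _.
exact: differentiableZl.
Qed.


Lemma deriveDl (V : normedModType R) (W : normedModType R) (f g : V -> W) x v :
  derivable f x v -> derivable g x v ->
  'D_v (fun y => f y + g y) x = 'D_v f x + 'D_v g x.
Proof. exact: deriveD. Qed.

Lemma differentiableDl (V W : normedModType R) (f g : V -> W) x :
  differentiable f x -> differentiable g x -> differentiable (fun y => f y + g y) x.
Proof. exact: differentiableD. Qed.

Lemma deriveMl (V : normedModType R) (f g : V -> R) x v :
  derivable f x v -> derivable g x v ->
  'D_v (fun y => f y * g y) x = f x * 'D_v g x + g x * 'D_v f x.
Proof. exact: deriveM. Qed.

Lemma differentiableMl (V : normedModType R) (f g : V -> R) x :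
  differentiable f x -> differentiable g x -> differentiable (fun y => f y * g y) x.
Proof. exact: differentiableM. Qed.

Definition S2s m n (f : 'M[R]_(m, n) -> R) :=
  [/\ forall x, differentiable f x,
      forall b x, differentiable ('D_b f) x
    & forall a b x, 'D_a ('D_b f) x = 'D_b ('D_a f) x].
Arguments S2s {m n}.

Definition S2v m n p q (f : 'M[R]_(m, n) -> 'M[R]_(p, q)) :=
  forall i j, S2s (fun x => f x i j).
Arguments S2v {m n p q}.

Lemma S2v_diff m n p q (f : 'M[R]_(m, n) -> 'M[R]_(p, q)) x :
  S2v f -> differentiable f x.
Proof. by move=> H; apply: differentiable_mx => i j; case: (H i j). Qed.

Lemma dexpand (V : normedModType R) p q (h : 'M[R]_(p, q) -> V) y b :
  differentiable h y ->
  'D_b h y = \sum_(kl : 'I_p * 'I_q) b kl.1 kl.2 *: 'D_(delta_mx kl.1 kl.2) h y.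
Proof.
move=> dh; rewrite deriveE // {1}[b]matrix_sum_delta pair_big /= linear_sum.
apply: eq_bigr => kl _; rewrite linearZ /= deriveE //.
Qed.

Lemma FO m n p q (f : 'M[R]_(m, n) -> 'M[R]_(p, q)) (h : 'M[R]_(p, q) -> R) y b :
  differentiable f y -> differentiable h (f y) ->
  'D_b (fun x => h (f x)) y = \sum_(kl : 'I_p * 'I_q)
      'D_b (fun x => f x kl.1 kl.2) y * 'D_(delta_mx kl.1 kl.2) h (f y).
Proof.
move=> df dh; rewrite (_ : (fun x => h (f x)) = h \o f) //.
rewrite deriveE; last exact: differentiable_comp.
rewrite diff_comp // /= -deriveE // dexpand //.
apply: eq_bigr => kl _; rewrite -derive_mx_coord // -deriveE // mulrC.
Qed.

End Calc.


Section Calc2.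
Variable R : realType.
Local Notation S2s := (@S2s R _ _).
Local Notation S2v := (@S2v R _ _ _ _).

Lemma diff_eqf {V W : normedModType R} (f g : V -> W) x :
  (forall y, f y = g y) -> differentiable g x -> differentiable f x.
Proof. by move=> /funext ->. Qed.

Lemma derive_eqf {V W : normedModType R} (f g : V -> W) x v :
  (forall y, f y = g y) -> 'D_v f x = 'D_v g x.
Proof. by move=> /funext ->. Qed.

Lemma diffD_eqf {V W : normedModType R} {F : V -> W} {G b x} :
  (forall y, 'D_b F y = G y) -> differentiable G x -> differentiable ('D_b F) x.
Proof. by move=> H; apply: diff_eqf. Qed.

Lemma deriveD_eqf {V W : normedModType R} {F : V -> W} {G} a {b x} :
  (forall y, 'D_b F y = G y) -> 'D_a ('D_b F) x = 'D_a G x.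
Proof. by move=> H; apply: derive_eqf. Qed.

Lemma S2s_eqf m n (f g : 'M[R]_(m, n) -> R) :
  (forall y, f y = g y) -> S2s g -> S2s f.
Proof. by move=> /funext ->. Qed.

Lemma S2s_cst m n (c : R) : S2s (fun _ : 'M[R]_(m, n) => c).
Proof.
have E : forall b y, 'D_b (fun _ : 'M[R]_(m, n) => c) y = 0.
  by move=> b y; exact: derive_cst.
split=> [x|b x|a b x].
- exact: differentiable_cst.
- apply: (diffD_eqf (E b)); exact: differentiable_cst.
- by rewrite (deriveD_eqf _ (E b)) (deriveD_eqf _ (E a)) !derive_cst.
Qed.

Lemma S2s_coord m n (i : 'I_m) (j : 'I_n) : S2s (fun x : 'M[R]_(m, n) => x i j).
Proof.
have E : forall b y, 'D_b (fun x : 'M[R]_(m, n) => x i j) y = b i j.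
  by move=> b y; exact: derive_coord.
split=> [x|b x|a b x].
- exact: differentiable_coord.
- apply: (diffD_eqf (E b)); exact: differentiable_cst.
- by rewrite (deriveD_eqf _ (E b)) (deriveD_eqf _ (E a)) !derive_cst.
Qed.

Lemma S2s_add m n (f g : 'M[R]_(m, n) -> R) :
  S2s f -> S2s g -> S2s (fun x => f x + g x).
Proof.
move=> [f1 f2 f3] [g1 g2 g3].
have E : forall b y, 'D_b (fun x => f x + g x) y = 'D_b f y + 'D_b g y.
  by move=> b y; apply: deriveDl; exact: diff_derivable.
split=> [x|b x|a b x].
- exact: differentiableDl.
- apply: (diffD_eqf (E b)); exact: differentiableDl.
- rewrite (deriveD_eqf _ (E b)) (deriveD_eqf _ (E a)).
  rewrite deriveDl; try exact: diff_derivable.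
  rewrite deriveDl; try exact: diff_derivable.
  by rewrite f3 g3.
Qed.

Lemma S2s_mul m n (f g : 'M[R]_(m, n) -> R) :
  S2s f -> S2s g -> S2s (fun x => f x * g x).
Proof.
move=> [f1 f2 f3] [g1 g2 g3].
have E : forall b y, 'D_b (fun x => f x * g x) y = f y * 'D_b g y + g y * 'D_b f y.
  by move=> b y; apply: deriveMl; exact: diff_derivable.
split=> [x|b x|a b x].
- exact: differentiableMl.
- apply: (diffD_eqf (E b)); apply: differentiableDl; exact: differentiableMl.
- rewrite (deriveD_eqf _ (E b)) (deriveD_eqf _ (E a)).
  rewrite deriveDl; try (apply: diff_derivable; exact: differentiableMl).
  rewrite deriveDl; try (apply: diff_derivable; exact: differentiableMl).
  rewrite !deriveMl; try exact: diff_derivable.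
  by rewrite f3 g3 [_ * 'D_a f x]mulrC [_ * 'D_a g x]mulrC addrACA [in RHS]addrACA [_ * 'D_b f x + _]addrC.
Qed.

Lemma S2s_big m n (I : Type) (r : seq I) (P : pred I) (F : I -> 'M[R]_(m, n) -> R) :
  (forall i, P i -> S2s (F i)) -> S2s (fun x => \sum_(i <- r | P i) F i x).
Proof.
move=> H; elim: r => [|i r IH].
  apply: (@S2s_eqf _ _ _ (fun _ => 0)); last exact: S2s_cst.
  by move=> y; rewrite big_nil.
case: (boolP (P i)) => Pi.
  apply: (@S2s_eqf _ _ _ (fun y => F i y + \sum_(j <- r | P j) F j y)).
    by move=> y; rewrite big_cons Pi.
  exact: S2s_add (H i Pi) IH.
apply: (@S2s_eqf _ _ _ (fun y => \sum_(j <- r | P j) F j y)) => //.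
by move=> y; rewrite big_cons (negbTE Pi).
Qed.


Lemma sym_sum (I : finType) (A B : I -> R) (H : I -> I -> R) (G C C' : I -> R) :
  (forall i j, H i j = H j i) -> (forall i, C i = C' i) ->
  \sum_i (A i * \sum_j (B j * H j i) + G i * C i) =
  \sum_i (B i * \sum_j (A j * H j i) + G i * C' i).
Proof.
move=> HS HC; rewrite !big_split /=; congr (_ + _); last first.
  by apply: eq_bigr => i _; rewrite HC.
under eq_bigr do rewrite mulr_sumr.
under [RHS]eq_bigr do rewrite mulr_sumr.
rewrite [RHS]exchange_big /=; apply: eq_bigr => i _; apply: eq_bigr => j _.
by rewrite HS mulrCA.
Qed.

Lemma Dcomp1 m n (s : R -> R) (f : 'M[R]_(m, n) -> R) y b :
  derivable s (f y) 1 -> differentiable f y ->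
  'D_b (fun x => s (f x)) y = 'D_b f y * (derive1 s) (f y).
Proof.
move=> ds df; have ds' : differentiable s (f y) by apply/derivable1_diffP.
rewrite deriveE; last exact: differentiable_comp.
by rewrite diff_comp // deriv1E //= -deriveE.
Qed.

Lemma S2s_sig m n (s : R -> R) (f : 'M[R]_(m, n) -> R) :
  (forall x, derivable s x 1) -> (forall x, derivable (derive1 s) x 1) ->
  S2s f -> S2s (fun x => s (f x)).
Proof.
move=> d1 d2 [f1 f2 f3].
have E : forall b y, 'D_b (fun x => s (f x)) y = 'D_b f y * (derive1 s) (f y).
  by move=> b y; apply: Dcomp1.
have Ds : forall x, differentiable s x by move=> x; apply/derivable1_diffP.
have Ds' : forall x, differentiable (derive1 s) x by move=> x; apply/derivable1_diffP.
split=> [x|b x|a b x].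
- exact: (differentiable_comp (f1 x) (Ds _)).
- apply: (diffD_eqf (E b)); apply: differentiableMl => //.
  exact: (differentiable_comp (f1 x) (Ds' _)).
- have Dc : forall z, differentiable (fun x => (derive1 s) (f x)) z.
    by move=> z; exact: (differentiable_comp (f1 z) (Ds' _)).
  rewrite (deriveD_eqf _ (E b)) (deriveD_eqf _ (E a)).
  rewrite !deriveMl; try exact: diff_derivable.
  rewrite (@Dcomp1 _ _ (derive1 s) f x a (d2 _) (f1 x)).
  rewrite (@Dcomp1 _ _ (derive1 s) f x b (d2 _) (f1 x)) f3.
  by rewrite mulrCA.
Qed.

Lemma S2s_comp m n p q (g : 'M[R]_(p, q) -> R) (f : 'M[R]_(m, n) -> 'M[R]_(p, q)) :
  S2s g -> S2v f -> S2s (fun x => g (f x)).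
Proof.
move=> [g1 g2 g3] Sf.
have df : forall x, differentiable f x by move=> x; exact: S2v_diff.
pose fc (kl : 'I_p * 'I_q) x := f x kl.1 kl.2.
have Sfc : forall kl, S2s (fc kl) by move=> kl; exact: Sf.
pose G (kl : 'I_p * 'I_q) := 'D_(delta_mx kl.1 kl.2) g.
have dG : forall kl y, differentiable (fun x => G kl (f x)) y.
  by move=> kl y; exact: (differentiable_comp (df y) (g2 _ _)).
have E : forall b y, 'D_b (fun x => g (f x)) y =
   \sum_(kl : 'I_p * 'I_q) 'D_b (fc kl) y * G kl (f y).
  by move=> b y; exact: FO.
have dE : forall b y, differentiable (fun y => \sum_(kl : 'I_p * 'I_q) 'D_b (fc kl) y * G kl (f y)) y.
  move=> b y; apply: differentiable_big => kl _; apply: differentiableMl => //.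
  by case: (Sfc kl).
split=> [x|b x|a b x].
- exact: (differentiable_comp (df x) (g1 _)).
- exact: (diffD_eqf (E b)).
- have D2 : forall a b, 'D_a ('D_b (fun x : 'M[R]_(m, n) => g (f x))) x =
     \sum_(kl : 'I_p * 'I_q) ('D_b (fc kl) x *
         \sum_(mn : 'I_p * 'I_q) ('D_a (fc mn) x * 'D_(delta_mx mn.1 mn.2) (G kl) (f x))
        + G kl (f x) * 'D_a ('D_b (fc kl)) x).
    move=> a' b'; rewrite (deriveD_eqf _ (E b')) derive_big; last first.
      by move=> kl _; apply: differentiableMl => //; case: (Sfc kl).
    apply: eq_bigr => kl _; rewrite deriveMl; first last.
    + exact: diff_derivable.
    + by apply: diff_derivable; case: (Sfc kl).
    by rewrite (@FO R _ _ _ _ f (G kl) x a' (df x) (g2 _ _)).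
  apply: (etrans (D2 a b)); apply: esym; apply: (etrans (D2 b a)); apply: esym.
  apply: (@sym_sum _ (fun kl => 'D_b (fc kl) x) (fun mn => 'D_a (fc mn) x)
     (fun mn kl => 'D_(delta_mx mn.1 mn.2) (G kl) (f x)) (fun kl => G kl (f x))
     (fun kl => 'D_a ('D_b (fc kl)) x) (fun kl => 'D_b ('D_a (fc kl)) x)).
    by move=> i j; rewrite /G g3.
  by move=> kl; case: (Sfc kl) => _ _ ->.
Qed.

End Calc2.


Section Calc3.
Variable R : realType.
Local Notation S2s := (@S2s R _ _).
Local Notation S2v := (@S2v R _ _ _ _).

Lemma S2v_eqf m n p q (f g : 'M[R]_(m, n) -> 'M[R]_(p, q)) :
  (forall y, f y = g y) -> S2v g -> S2v f.
Proof. by move=> /funext ->. Qed.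

Lemma lin_expand m n p q (L : 'M[R]_(m, n) -> 'M[R]_(p, q)) :
  (forall a x y, L (a *: x + y) = a *: L x + L y) ->
  forall x i j, L x i j = \sum_(kl : 'I_m * 'I_n) x kl.1 kl.2 * L (delta_mx kl.1 kl.2) i j.
Proof.
move=> H x i j.
pose lM := GRing.isLinear.Build R _ _ _ L H.
pose LL : {linear _ -> _} := HB.pack L lM.
rewrite (_ : L x = LL x) //.
have Ex : x = \sum_(kl : 'I_m * 'I_n) x kl.1 kl.2 *: delta_mx kl.1 kl.2.
  by rewrite {1}[x]matrix_sum_delta pair_big.
rewrite {1}Ex linear_sum.
rewrite summxE; apply: eq_bigr => kl _; rewrite linearZ /= mxE //.
Qed.

Lemma S2v_lin m n p q (L : 'M[R]_(m, n) -> 'M[R]_(p, q)) :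
  (forall a x y, L (a *: x + y) = a *: L x + L y) -> S2v L.
Proof.
move=> H i j; apply: (@S2s_eqf R _ _ _ (fun x => \sum_(kl : 'I_m * 'I_n) x kl.1 kl.2 * L (delta_mx kl.1 kl.2) i j)).
  by move=> y /=; exact: (@lin_expand _ _ _ _ L H).
apply: S2s_big => kl _; apply: S2s_mul; [exact: S2s_coord|exact: S2s_cst].
Qed.

Lemma S2v_addc m n p q (f : 'M[R]_(m, n) -> 'M[R]_(p, q)) c :
  S2v f -> S2v (fun x => f x + c).
Proof.
move=> H i j; apply: (@S2s_eqf R _ _ _ (fun x => f x i j + c i j)).
  by move=> y /=; rewrite mxE.
by apply: S2s_add; [exact: H|exact: S2s_cst].
Qed.

Lemma S2v_add m n p q (f g : 'M[R]_(m, n) -> 'M[R]_(p, q)) :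
  S2v f -> S2v g -> S2v (fun x => f x + g x).
Proof.
move=> H G i j; apply: (@S2s_eqf R _ _ _ (fun x => f x i j + g x i j)).
  by move=> y /=; rewrite mxE.
by apply: S2s_add; [exact: H|exact: G].
Qed.

Lemma S2v_comp m n p q r s (g : 'M[R]_(p, q) -> 'M[R]_(r, s)) (f : 'M[R]_(m, n) -> 'M[R]_(p, q)) :
  S2v g -> S2v f -> S2v (fun x => g (f x)).
Proof. by move=> G F i j; apply: (@S2s_comp R _ _ _ _ (fun z => g z i j)). Qed.

Lemma S2v_id m n : S2v (fun x : 'M[R]_(m, n) => x).
Proof. by move=> i j; exact: S2s_coord. Qed.

Lemma S2v_map m n (s : R -> R) :
  (forall x, derivable s x 1) -> (forall x, derivable (derive1 s) x 1) ->
  S2v (fun x : 'M[R]_(m, n) => map_mx s x).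
Proof.
move=> d1 d2 i j; apply: (@S2s_eqf R _ _ _ (fun x => s (x i j))).
  by move=> y /=; rewrite mxE.
exact: (@S2s_sig R _ _ s (fun x => x i j) d1 d2 (@S2s_coord R _ _ i j)).
Qed.

Lemma Dchain (U V W : normedModType R) (f : U -> V) (g : V -> W) x v :
  differentiable f x -> differentiable g (f x) ->
  'D_v (fun y => g (f y)) x = 'D_('D_v f x) g (f x).
Proof.
move=> df dg; rewrite (_ : (fun y => g (f y)) = g \o f) //.
rewrite deriveE; last exact: differentiable_comp.
by rewrite diff_comp // /= -!deriveE.
Qed.

Lemma DDiff m n p q (f : 'M[R]_(m, n) -> 'M[R]_(p, q)) b x :
  S2v f -> differentiable ('D_b f) x.
Proof.
move=> H; apply: differentiable_mx => i j.
apply: (@diff_eqf R _ _ _ ('D_b (fun y => f y i j))).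
  by move=> y /=; rewrite derive_mx_coord //; exact: S2v_diff.
by case: (H i j).
Qed.

Lemma D2coord m n p q (f : 'M[R]_(m, n) -> 'M[R]_(p, q)) a b x i j :
  S2v f -> ('D_a ('D_b f) x) i j = 'D_a ('D_b (fun y => f y i j)) x.
Proof.
move=> H; rewrite derive_mx_coord; last exact: DDiff.
apply: derive_eqf => y /=; rewrite derive_mx_coord //; exact: S2v_diff.
Qed.

Lemma D2sym m n p q (f : 'M[R]_(m, n) -> 'M[R]_(p, q)) a b x :
  S2v f -> 'D_a ('D_b f) x = 'D_b ('D_a f) x.
Proof.
move=> H; apply/matrixP => i j; apply: (etrans (@D2coord _ _ _ _ f a b x i j H)).
apply: esym; apply: (etrans (@D2coord _ _ _ _ f b a x i j H)); apply: esym.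
by case: (H i j) => _ _ ->.
Qed.

Lemma D1lin (V : normedModType R) m n (f : 'M[R]_(m, n) -> V) x :
  differentiable f x ->
  forall a u v, 'D_(a *: u + v) f x = a *: 'D_u f x + 'D_v f x.
Proof. by move=> df a u v; rewrite !deriveE // linearP. Qed.

Lemma D2lin m n p q (f : 'M[R]_(m, n) -> 'M[R]_(p, q)) x c :
  S2v f -> forall a u v,
  'D_c ('D_(a *: u + v) f) x = a *: 'D_c ('D_u f) x + 'D_c ('D_v f) x.
Proof.
move=> H a u v.
have E : forall y, ('D_(a *: u + v) f) y = (a *: 'D_u f + 'D_v f) y.
  by move=> y; apply: D1lin; exact: S2v_diff.
apply: (etrans (derive_eqf _ _ _ x c E)); rewrite deriveD; first last.
- by apply: diff_derivable; exact: DDiff.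
- by apply: diff_derivable; apply: differentiableZ; exact: DDiff.
rewrite deriveZ //; apply: diff_derivable; exact: DDiff.
Qed.

End Calc3.


Section Adj.
Variable R : realType.

Lemma adj_ext a b c d (F G : 'M[R]_(a, b) -> 'M[R]_(c, d)) :
  (forall u, F u = G u) -> adj F = adj G.
Proof. by move=> /funext ->. Qed.

Lemma adj_add a b c d (F G : 'M[R]_(a, b) -> 'M[R]_(c, d)) Y :
  adj (fun u => F u + G u) Y = adj F Y + adj G Y.
Proof.
apply/matrixP => i j; rewrite !mxE /frob -big_split /=; apply: eq_bigr => k _.
rewrite -big_split /=; apply: eq_bigr => l _; by rewrite mxE mulrDr.
Qed.

Lemma adj_comp a b c d e f (A : 'M[R]_(c, d) -> 'M[R]_(e, f)) (P : 'M[R]_(a, b) -> 'M[R]_(c, d)) Y :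
  (forall s x y, A (s *: x + y) = s *: A x + A y) ->
  adj P (adj A Y) = adj (fun u => A (P u)) Y.
Proof.
move=> HA; apply/matrixP => i j; rewrite !mxE /frob.
set M := P (delta_mx i j).
under eq_bigr do under eq_bigr do rewrite mxE.
under [RHS]eq_bigr do under eq_bigr do rewrite (@lin_expand R _ _ _ _ A HA).
rewrite pair_big /=.
under eq_bigr do rewrite /frob mulr_suml.
under eq_bigr do under eq_bigr do rewrite mulr_suml.
rewrite exchange_big /=; apply: eq_bigr => i' _.
rewrite exchange_big /=; apply: eq_bigr => j' _.
rewrite mulr_sumr; apply: eq_bigr => kl _.
by rewrite mulrCA mulrC.
Qed.

End Adj.

Section Main.
Variable R : realType.
Local Notation S2s := (@S2s R _ _).
Local Notation S2v := (@S2v R _ _ _ _).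

Lemma D2expand m n (f : 'M[R]_(m, n) -> R) a b x :
  S2s f -> 'D_a ('D_b f) x =
  \sum_(kl : 'I_m * 'I_n) b kl.1 kl.2 * 'D_a ('D_(delta_mx kl.1 kl.2) f) x.
Proof.
move=> [f1 f2 f3].
have E : forall y, ('D_b f) y =
   (fun y => \sum_(kl : 'I_m * 'I_n) b kl.1 kl.2 *: 'D_(delta_mx kl.1 kl.2) f y) y.
  by move=> y; exact: dexpand.
apply: (etrans (derive_eqf _ _ _ x a E)); rewrite derive_big; last first.
  by move=> kl _; apply: differentiableZ.
apply: eq_bigr => kl _; rewrite deriveZ //; exact: diff_derivable.
Qed.

Variables (a1 b1 m1 n1 a2 b2 a3 b3 a4 b4 : nat).
Variable phi : 'M[R]_(a1, b1) -> 'M[R]_(a2, b2) -> 'M[R]_(a3, b3).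
Variable om : 'M[R]_(a3, b3) -> 'M[R]_(a4, b4).
Variable al : 'M[R]_(m1, n1) -> 'M[R]_(a2, b2).

Definition iota (p : 'M[R]_(a1, b1)) (y : 'M[R]_(a2, b2)) : 'M[R]_(1, a1 * b1 + a2 * b2) :=
  row_mx (mxvec p) (mxvec y).
Definition Jf (Z : 'M[R]_(1, a1 * b1 + a2 * b2)) := phi (vec_mx (lsubmx Z)) (vec_mx (rsubmx Z)).

Hypothesis SJ : S2v Jf.
Hypothesis Som : S2v om.
Hypothesis dal : forall x, differentiable al x.

Lemma iota_lin s p p' y y' : iota (s *: p + p') (s *: y + y') = s *: iota p y + iota p' y'.
Proof. by rewrite /iota !linearP /= scale_row_mx add_row_mx. Qed.

Lemma phiJ p y : phi p y = Jf (iota p y).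
Proof. by rewrite /Jf /iota row_mxKl row_mxKr !mxvecK. Qed.

Lemma iota_p h u p y : iota (h *: u + p) y = h *: iota u 0 + iota p y.
Proof. by rewrite -iota_lin scaler0 add0r. Qed.

Lemma iota_y h v p y : iota p (h *: v + y) = h *: iota 0 v + iota p y.
Proof. by rewrite -iota_lin scaler0 add0r. Qed.

Lemma Dp u p y : 'D_u (fun q => phi q y) p = 'D_(iota u 0) Jf (iota p y).
Proof. by apply: derive_ext => h; rewrite phiJ iota_p. Qed.

Lemma Dy v p y : 'D_v (fun z => phi p z) y = 'D_(iota 0 v) Jf (iota p y).
Proof. by apply: derive_ext => h; rewrite phiJ iota_y. Qed.

Lemma S2v_iy p : S2v (fun y => iota p y).
Proof.
apply: (@S2v_eqf R _ _ _ _ _ (fun y => iota 0 y + iota p 0)).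
  by move=> y /=; have := iota_lin 1 0 p y 0; rewrite !scale1r add0r addr0 => ->.
apply: S2v_addc; apply: S2v_lin => s x y.
by rewrite -iota_lin scaler0 addr0.
Qed.

Lemma S2v_ip y : S2v (fun p => iota p y).
Proof.
apply: (@S2v_eqf R _ _ _ _ _ (fun p => iota p 0 + iota 0 y)).
  by move=> p /=; have := iota_lin 1 p 0 0 y; rewrite !scale1r add0r addr0 => ->.
apply: S2v_addc; apply: S2v_lin => s x x'.
by rewrite -iota_lin scaler0 addr0.
Qed.

Lemma S2v_phiy p : S2v (fun y => phi p y).
Proof.
apply: (@S2v_eqf R _ _ _ _ _ (fun y => Jf (iota p y))); first by move=> y; rewrite phiJ.
exact: (@S2v_comp R _ _ _ _ _ _ Jf _ SJ (S2v_iy p)).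
Qed.

Lemma S2v_phip y : S2v (fun p => phi p y).
Proof.
apply: (@S2v_eqf R _ _ _ _ _ (fun p => Jf (iota p y))); first by move=> p; rewrite phiJ.
exact: (@S2v_comp R _ _ _ _ _ _ Jf _ SJ (S2v_ip y)).
Qed.

Lemma adj_ext' a b c d (F G : 'M[R]_(a, b) -> 'M[R]_(c, d)) Y :
  (forall u, F u = G u) -> adj F Y = adj G Y.
Proof. by move=> /funext ->. Qed.

Lemma dg v1 x0 p : differentiable (fun q => 'D_v1 (phi q) x0) p.
Proof.
apply: (@diff_eqf R _ _ _ (fun q => ('D_(iota 0 v1) Jf) (iota q x0))).
  by move=> q; exact: Dy.
apply: (@differentiable_comp R _ _ _ (fun q => iota q x0) ('D_(iota 0 v1) Jf)).
  exact: S2v_diff (S2v_ip x0).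
exact: DDiff.
Qed.

Lemma dgc v1 x0 p k l : differentiable (fun q => ('D_v1 (phi q) x0) k l) p.
Proof.
apply: (@differentiable_comp R _ _ _ (fun q => 'D_v1 (phi q) x0) (fun M : 'M[R]_(a3, b3) => M k l)).
  exact: dg.
exact: differentiable_coord.
Qed.

Lemma mixed u v p0 y0 :
  'D_u (fun q => 'D_v (phi q) y0) p0 = 'D_v (fun z => 'D_u (fun q => phi q z) p0) y0.
Proof.
have E1 : forall q, (fun q => 'D_v (phi q) y0) q = (fun q => ('D_(iota 0 v) Jf) (iota q y0)) q.
  by move=> q; exact: Dy.
apply: (etrans (derive_eqf _ _ _ p0 u E1)).
have E2 : forall z, (fun z => 'D_u (fun q => phi q z) p0) z = (fun z => ('D_(iota u 0) Jf) (iota p0 z)) z.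
  by move=> z; exact: Dp.
apply: esym; apply: (etrans (derive_eqf _ _ _ y0 v E2)); apply: esym.
apply: (etrans (y := 'D_(iota u 0) ('D_(iota 0 v) Jf) (iota p0 y0))).
  by apply: derive_ext => h /=; rewrite iota_p.
apply: (etrans (y := 'D_(iota 0 v) ('D_(iota u 0) Jf) (iota p0 y0))).
  exact: D2sym.
by apply: esym; apply: derive_ext => h /=; rewrite iota_y.
Qed.

Lemma Kc p x0 v1 i j :
  ('D_('D_v1 (phi p) x0) om (phi p x0)) i j =
  \sum_(kl : 'I_a3 * 'I_b3) ('D_v1 (phi p) x0) kl.1 kl.2 *
      'D_(delta_mx kl.1 kl.2) (fun y => om y i j) (phi p x0).
Proof.
rewrite derive_mx_coord; last exact: S2v_diff.
apply: dexpand; by case: (Som i j).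
Qed.

Lemma dKc x0 v1 i j p :
  differentiable (fun p => \sum_(kl : 'I_a3 * 'I_b3) ('D_v1 (phi p) x0) kl.1 kl.2 *
      'D_(delta_mx kl.1 kl.2) (fun y => om y i j) (phi p x0)) p.
Proof.
apply: differentiable_big => kl _; apply: differentiableMl; first exact: dgc.
apply: (@differentiable_comp R _ _ _ (fun p => phi p x0) ('D_(delta_mx kl.1 kl.2) (fun y => om y i j))).
  exact: S2v_diff (S2v_phip x0).
by case: (Som i j).
Qed.

Lemma dK x0 v1 p : differentiable (fun p => 'D_('D_v1 (phi p) x0) om (phi p x0)) p.
Proof.
apply: differentiable_mx => i j.
apply: (diff_eqf _ _ _ _ (fun p => Kc p x0 v1 i j)); exact: dKc.
Qed.

Lemma Kder u p0 x0 v1 i j :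
  ('D_u (fun p => 'D_('D_v1 (phi p) x0) om (phi p x0)) p0) i j =
  \sum_(kl : 'I_a3 * 'I_b3) (('D_v1 (fun y => 'D_u (fun p => phi p y) p0) x0) kl.1 kl.2 *
      'D_(delta_mx kl.1 kl.2) (fun y => om y i j) (phi p0 x0)
    + ('D_v1 (phi p0) x0) kl.1 kl.2 *
      'D_('D_u (fun p => phi p x0) p0) ('D_(delta_mx kl.1 kl.2) (fun y => om y i j)) (phi p0 x0)).
Proof.
apply: (etrans (@derive_mx_coord R _ _ _ _ p0 u i j (dK x0 v1 p0))).
apply: (etrans (derive_eqf _ _ _ p0 u (fun p => Kc p x0 v1 i j))).
rewrite derive_big; last first.
  move=> kl _; apply: differentiableMl; first exact: dgc.
  apply: (@differentiable_comp R _ _ _ (fun p => phi p x0) ('D_(delta_mx kl.1 kl.2) (fun y => om y i j))).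
    exact: S2v_diff (S2v_phip x0).
  by case: (Som i j).
apply: eq_bigr => kl _.
have d1 : differentiable (fun p => phi p x0) p0 by exact: S2v_diff (S2v_phip x0).
have d2 : differentiable ('D_(delta_mx kl.1 kl.2) (fun y => om y i j)) (phi p0 x0).
  by case: (Som i j).
rewrite deriveMl; first last.
- apply: diff_derivable; exact: (@differentiable_comp R _ _ _ (fun p => phi p x0) _ _ d1 d2).
- apply: diff_derivable; exact: dgc.
rewrite (@Dchain R _ _ _ (fun p => phi p x0) ('D_(delta_mx kl.1 kl.2) (fun y => om y i j)) p0 u d1 d2).
rewrite -(@derive_mx_coord R _ _ _ (fun q => 'D_v1 (phi q) x0) p0 u kl.1 kl.2 (dg v1 x0 p0)) mixed.
by rewrite addrC mulrC.
Qed.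

Lemma addmxij m n (A B : 'M[R]_(m, n)) i j : (A + B) i j = A i j + B i j.
Proof. by rewrite mxE. Qed.

Lemma core (V1 x0 : 'M[R]_(a2, b2)) (V2 h0 : 'M[R]_(a3, b3))
  (F : 'M[R]_(a1, b1) -> 'M[R]_(a4, b4)) p0 Y :
  h0 = phi p0 x0 -> V2 = 'D_V1 (phi p0) x0 ->
  (forall p, F p = 'D_('D_V1 (phi p) x0) om (phi p x0)) ->
  adj (fun u => 'D_u F p0) Y =
  adj (fun u => 'D_u (fun p => phi p x0) p0) (adj (fun e => 'D_V2 (fun y => 'D_e om y) h0) Y)
  + adj (fun u => 'D_V1 (fun y => 'D_u (fun p => phi p y) p0) x0) (adj (fun e => 'D_e om h0) Y).
Proof.
move=> -> -> HF.
have -> : F = (fun p => 'D_('D_V1 (phi p) x0) om (phi p x0)) by apply/funext.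
rewrite (@adj_comp R _ _ _ _ _ _ (fun e => 'D_('D_V1 (phi p0) x0) (fun y => 'D_e om y) (phi p0 x0)) (fun u => 'D_u (fun p => phi p x0) p0) Y); last first.
  by move=> s e1 e2; apply: D2lin.
rewrite (@adj_comp R _ _ _ _ _ _ (fun e => 'D_e om (phi p0 x0)) (fun u => 'D_V1 (fun y => 'D_u (fun p => phi p y) p0) x0) Y); last first.
  by move=> s e1 e2; apply: D1lin; exact: S2v_diff.
rewrite -adj_add; apply: adj_ext' => u /=.
apply/matrixP => i j; apply: (etrans (Kder u p0 x0 V1 i j)).
apply: esym; apply: (etrans (addmxij _ _ _ _ i j)); apply: esym.
rewrite (@D2sym R _ _ _ _ om ('D_V1 (phi p0) x0) ('D_u (fun p => phi p x0) p0) (phi p0 x0) Som).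
rewrite (@D2coord R _ _ _ _ om ('D_u (fun p => phi p x0) p0) ('D_V1 (phi p0) x0) (phi p0 x0) i j Som).
rewrite D2expand; last exact: Som.
rewrite derive_mx_coord; last exact: S2v_diff.
have dom : differentiable (fun y => om y i j) (phi p0 x0) by case: (Som i j).
rewrite (@dexpand R _ _ _ (fun y => om y i j) (phi p0 x0) ('D_V1 (fun y => 'D_u (fun p => phi p y) p0) x0) dom).
by rewrite big_split /= addrC.
Qed.

Lemma main_adj (N : 'M[R]_(a1, b1) -> 'M[R]_(m1, n1) -> 'M[R]_(a4, b4))
  (al1 : 'M[R]_(m1, n1) -> 'M[R]_(a3, b3)) X V p0 Y :
  (forall p X', N p X' = om (phi p (al X'))) -> (forall X', al1 X' = phi p0 (al X')) ->
  adj (fun u => 'D_u (fun p => 'D_V (N p) X) p0) Y =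
  adj (fun u => 'D_u (fun p => phi p (al X)) p0)
      (adj (fun e => 'D_('D_V al1 X) (fun y => 'D_e om y) (al1 X)) Y)
  + adj (fun u => 'D_('D_V al X) (fun y => 'D_u (fun p => phi p y) p0) (al X))
      (adj (fun e => 'D_e om (al1 X)) Y).
Proof.
move=> HN H1.
have dphi : forall p y, differentiable (phi p) y.
  by move=> p y; exact: S2v_diff (S2v_phiy p).
apply: (@core ('D_V al X) (al X) ('D_V al1 X) (al1 X) (fun p => 'D_V (N p) X) p0 Y).
- exact: H1.
- apply: (etrans (derive_eqf _ _ _ X V H1)).
  exact: (@Dchain R _ _ _ al (phi p0) X V (dal X) (dphi _ _)).
- move=> p.
  apply: (etrans (derive_eqf _ _ _ X V (HN p))).
  have d1 : differentiable (fun X' => phi p (al X')) X.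
    exact: (@differentiable_comp R _ _ _ al (phi p) X (dal X) (dphi _ _)).
  apply: (etrans (@Dchain R _ _ _ (fun X' => phi p (al X')) om X V d1 (@S2v_diff R _ _ _ _ om (phi p (al X)) Som))).
  by rewrite (@Dchain R _ _ _ al (phi p) X V (dal X) (dphi _ _)).
Qed.

End Main.


Section Lin.
Variable R : realType.

Lemma chan_lin a b c (s : R) (X Y : @tens R a b c) i :
  chan (s *: X + Y) i = s *: chan X i + chan Y i.
Proof. by apply/matrixP => r k; rewrite !mxE. Qed.

Lemma mktens_lin a b c (s : R) (G H : 'I_c -> 'M[R]_(a, b)) :
  mktens (fun i => s *: G i + H i) = s *: mktens G + mktens H.
Proof. by apply/matrixP => i j; rewrite !mxE linearP /= !mxE. Qed.

Lemma mktens_ext a b c (F G : 'I_c -> 'M[R]_(a, b)) :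
  (forall i, F i = G i) -> mktens F = mktens G.
Proof. by move=> /funext ->. Qed.

Lemma frob_linr a b (M N N' : 'M[R]_(a, b)) (s : R) :
  frob M (s *: N + N') = s * frob M N + frob M N'.
Proof.
rewrite /frob mulr_sumr -big_split /=; apply: eq_bigr => i _.
rewrite mulr_sumr -big_split /=; apply: eq_bigr => j _.
by rewrite !mxE mulrDr mulrCA.
Qed.

Lemma frob_linl a b (M M' N : 'M[R]_(a, b)) (s : R) :
  frob (s *: M + M') N = s * frob M N + frob M' N.
Proof.
rewrite /frob mulr_sumr -big_split /=; apply: eq_bigr => i _.
rewrite mulr_sumr -big_split /=; apply: eq_bigr => j _.
by rewrite !mxE mulrDl mulrA.
Qed.

Lemma Phi_lin p q c (v : 'rV[R]_c) (s : R) (U U' : @tens R p q c) :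
  Phi v (s *: U + U') = s *: Phi v U + Phi v U'.
Proof.
rewrite /Phi scaler_sumr -big_split /=; apply: eq_bigr => i _.
by rewrite chan_lin scalerDr !scalerA mulrC.
Qed.

Lemma mxat_lin a b (Q Q' : 'M[R]_(a, b)) (s : R) i j :
  mxat (s *: Q + Q') i j = s * mxat Q i j + mxat Q' i j.
Proof.
rewrite /mxat; case: (insub i : option 'I_a) => [i'|]; case: (insub j : option 'I_b) => [j'|];
  by rewrite ?mxE ?mulr0 ?addr0.
Qed.

Lemma kappa_lin p q a b j0 k0 (Q Q' : 'M[R]_(a, b)) (s : R) :
  kappa p q j0 k0 (s *: Q + Q') = s *: kappa p q j0 k0 Q + kappa p q j0 k0 Q'.
Proof. by apply/matrixP => r k; rewrite !mxE mxat_lin. Qed.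

Lemma Kop_lin p q a b c j0 k0 (X Y : @tens R a b c) (s : R) :
  Kop p q j0 k0 (s *: X + Y) = s *: Kop p q j0 k0 X + Kop p q j0 k0 Y.
Proof.
rewrite /Kop -mktens_lin; apply: mktens_ext => i.
by rewrite chan_lin kappa_lin.
Qed.

Lemma conv_linr a b c p q nb lb c' D (A : 'M[R]_(c', c)) (W : @tens R p q c')
  (X Y : @tens R a b c) (s : R) :
  Defs.conv nb lb D A W (s *: X + Y) = s *: Defs.conv nb lb D A W X + Defs.conv nb lb D A W Y.
Proof.
rewrite /Defs.conv -mktens_lin; apply: mktens_ext => i.
by apply/matrixP => j k; rewrite !mxE Kop_lin Phi_lin frob_linr.
Qed.

Lemma conv_linl a b c p q nb lb c' D (A : 'M[R]_(c', c)) (W W' : @tens R p q c')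
  (X : @tens R a b c) (s : R) :
  Defs.conv nb lb D A (s *: W + W') X = s *: Defs.conv nb lb D A W X + Defs.conv nb lb D A W' X.
Proof.
rewrite /Defs.conv -mktens_lin; apply: mktens_ext => i.
by apply/matrixP => j k; rewrite !mxE chan_lin frob_linl.
Qed.

Lemma Psiact_lin a b a' b' c (psi : {linear 'M[R]_(a, b) -> 'M[R]_(a', b')})
  (Y Y' : @tens R a b c) (s : R) :
  Psiact psi (s *: Y + Y') = s *: Psiact psi Y + Psiact psi Y'.
Proof.
rewrite /Psiact -mktens_lin; apply: mktens_ext => i.
by rewrite chan_lin linearP.
Qed.

Lemma SactE a b c (sg : R -> R) (Y : @tens R a b c) : Sact sg Y = map_mx sg Y.
Proof.
apply/matrixP => i j; rewrite /Sact !mxE -map_mxvec mxE /chan vec_mxK mxE //.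
Qed.

End Lin.

Section Net.
Variable R : realType.
Variable ar : arch R.
Local Notation S2s := (@S2s R _ _).
Local Notation S2v := (@S2v R _ _ _ _).

Lemma linP_sub m n1 n2 : forall (s : R) (x y : 'M[R]_(m, n1 + n2)),
  lsubmx (s *: x + y) = s *: lsubmx x + lsubmx y.
Proof. by move=> s x y; rewrite linearP. Qed.

Lemma linP_subr m n1 n2 : forall (s : R) (x y : 'M[R]_(m, n1 + n2)),
  rsubmx (s *: x + y) = s *: rsubmx x + rsubmx y.
Proof. by move=> s x y; rewrite linearP. Qed.

Lemma linP_vec m n : forall (s : R) (x y : 'M[R]_(1, m * n)),
  vec_mx (s *: x + y) = s *: vec_mx x + vec_mx y.
Proof. by move=> s x y; rewrite linearP. Qed.

Lemma S2v_bilin m n p1 q1 p2 q2 r s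
  (beta : 'M[R]_(p1, q1) -> 'M[R]_(p2, q2) -> 'M[R]_(r, s))
  (P1 : 'M[R]_(m, n) -> 'M[R]_(p1, q1)) (P2 : 'M[R]_(m, n) -> 'M[R]_(p2, q2)) :
  (forall y a x x', beta (a *: x + x') y = a *: beta x y + beta x' y) ->
  (forall x a y y', beta x (a *: y + y') = a *: beta x y + beta x y') ->
  (forall a x x', P1 (a *: x + x') = a *: P1 x + P1 x') ->
  (forall a x x', P2 (a *: x + x') = a *: P2 x + P2 x') ->
  S2v (fun Z => beta (P1 Z) (P2 Z)).
Proof.
move=> b1 b2 l1 l2 i j.
apply: (@S2s_eqf R _ _ _ (fun Z => \sum_(kl : 'I_p1 * 'I_q1)
     P1 Z kl.1 kl.2 * beta (delta_mx kl.1 kl.2) (P2 Z) i j)).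
  by move=> Z /=; exact: (@lin_expand R _ _ _ _ (fun x => beta x (P2 Z)) (b1 (P2 Z))).
apply: S2s_big => kl _; apply: S2s_mul.
  exact: (@S2v_lin R _ _ _ _ P1 l1).
apply: (@S2v_lin R _ _ _ _ (fun Z => beta (delta_mx kl.1 kl.2) (P2 Z))).
by move=> a x x'; rewrite l2 b2.
Qed.

Definition cv t := @Defs.conv R (n_ ar t) (l_ ar t) (m_ ar t) (p_ ar t) (q_ ar t)
  (nb_ ar t) (lb_ ar t) (m_ ar t.+1) (stride ar t) (Avec ar t).

Lemma layer_eq t (w : Wsp ar t) b y :
  layer w b y = Psiact (psi ar t) (map_mx (sig ar t) (cv t w y + b)).
Proof. by rewrite /layer SactE. Qed.

Lemma C2d (s : R -> R) : C2 s -> (forall x, derivable s x 1) /\ (forall x, derivable (derive1 s) x 1).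
Proof. move=> [d1 d2 _]; split. exact: d1. exact: d2. Qed.

Lemma S2v_layer_y t (w : Wsp ar t) (b : Bsp ar t) :
  C2 (sig ar t) -> S2v (fun y : St ar t => layer w b y).
Proof.
move=> /C2d [d1 d2].
apply: (@S2v_eqf R _ _ _ _ _ (fun y : St ar t => Psiact (psi ar t) (map_mx (sig ar t) (cv t w y + b)))).
  by move=> y; exact: layer_eq.
apply: (@S2v_comp R _ _ _ _ _ _ (Psiact (psi ar t))).
  by apply: S2v_lin => a x y; exact: Psiact_lin.
apply: (@S2v_comp R _ _ _ _ _ _ (fun x => map_mx (sig ar t) x)); first exact: S2v_map.
apply: S2v_addc; apply: S2v_lin => a x y; exact: conv_linr.
Qed.

Lemma SJ_W t (b : Bsp ar t) : C2 (sig ar t) ->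
  S2v (fun Z : 'M[R]_(1, m_ ar t.+1 * (p_ ar t * q_ ar t) + m_ ar t * (n_ ar t * l_ ar t)) =>
       layer (vec_mx (lsubmx Z) : Wsp ar t) b (vec_mx (rsubmx Z) : St ar t)).
Proof.
move=> /C2d [d1 d2].
apply: (@S2v_eqf R _ _ _ _ _ (fun Z => Psiact (psi ar t) (map_mx (sig ar t)
   (cv t (vec_mx (lsubmx Z)) (vec_mx (rsubmx Z)) + b)))).
  by move=> y; exact: layer_eq.
apply: (@S2v_comp R _ _ _ _ _ _ (Psiact (psi ar t))).
  by apply: S2v_lin => a x y; exact: Psiact_lin.
apply: (@S2v_comp R _ _ _ _ _ _ (fun x => map_mx (sig ar t) x)); first exact: S2v_map.
apply: S2v_addc; apply: S2v_bilin.
- by move=> y a x x'; exact: conv_linl.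
- by move=> x a y y'; exact: conv_linr.
- by move=> a x x'; rewrite linP_sub linP_vec.
- by move=> a x x'; rewrite linP_subr linP_vec.
Qed.

Lemma SJ_B t (w : Wsp ar t) : C2 (sig ar t) ->
  S2v (fun Z : 'M[R]_(1, m_ ar t.+1 * (nb_ ar t * lb_ ar t) + m_ ar t * (n_ ar t * l_ ar t)) =>
       layer w (vec_mx (lsubmx Z) : Bsp ar t) (vec_mx (rsubmx Z) : St ar t)).
Proof.
move=> /C2d [d1 d2].
apply: (@S2v_eqf R _ _ _ _ _ (fun Z => Psiact (psi ar t) (map_mx (sig ar t)
   (cv t w (vec_mx (rsubmx Z)) + vec_mx (lsubmx Z))))).
  by move=> y; exact: layer_eq.
apply: (@S2v_comp R _ _ _ _ _ _ (Psiact (psi ar t))).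
  by apply: S2v_lin => a x y; exact: Psiact_lin.
apply: (@S2v_comp R _ _ _ _ _ _ (fun x => map_mx (sig ar t) x)); first exact: S2v_map.
apply: S2v_lin => a x y.
rewrite linP_subr linP_sub !linP_vec /cv conv_linr.
by rewrite scalerDr addrACA.
Qed.

Lemma alphaS (W : Wfam ar) (B : Bfam ar) n X : (0 < n)%N ->
  alphaTo W B n.+1 X = layer (W n) (B n) (alphaTo W B n X).
Proof. by case: n. Qed.

Lemma alpha_omk (W : Wfam ar) (B : Bfam ar) k s X : (0 < s)%N ->
  alphaTo W B (k + s) X = omk W B k (alphaTo W B s X).
Proof.
move=> hs; elim: k => [|k IH] //.
change (alphaTo W B (k + s).+1 X = layer (W (k + s)) (B (k + s)) (omk W B k (alphaTo W B s X))).
by rewrite alphaS ?IH //; rewrite addn_gt0 hs orbT.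
Qed.

Lemma cast_alpha (W : Wfam ar) (B : Bfam ar) k m (e : k = m) X : castSt e (alphaTo W B k X) = alphaTo W B m X.
Proof. by case: m / e. Qed.

Lemma netF_dec (W : Wfam ar) (B : Bfam ar) L t (ht1 : (1 <= t)%N) (htL : (t <= L)%N) X :
  netF W B L X = @omega R ar W B L t.+1 htL (alphaTo W B t.+1 X).
Proof. by rewrite /netF /omega -alpha_omk // cast_alpha. Qed.

Lemma S2v_cast i j (e : i = j) m n (f : 'M[R]_(m, n) -> St ar i) :
  S2v f -> S2v (fun x => castSt e (f x)).
Proof. by case: j / e. Qed.

Lemma S2v_omk (W : Wfam ar) (B : Bfam ar) k s : (forall j, (j < k)%N -> C2 (sig ar (j + s))) ->
  S2v (fun y : St ar s => omk W B k y).
Proof.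
elim: k => [|k IH] H; first exact: S2v_id.
apply: (@S2v_comp R _ _ _ _ _ _ (fun z => layer (W (k + s)) (B (k + s)) z) (fun y => omk W B k y)).
  exact: (S2v_layer_y _ _ _ (H k (ltnSn k))).
by apply: IH => j hj; apply: H; exact: ltnW.
Qed.

Lemma S2v_omega (W : Wfam ar) (B : Bfam ar) L t (htL : (t <= L)%N) : arch_wf ar L ->
  S2v (fun y => @omega R ar W B L t.+1 htL y).
Proof.
move=> Hwf; rewrite /omega; apply: S2v_cast; apply: S2v_omk => j hj.
have hr : (1 <= j + t.+1 <= L)%N by apply/andP; split; lia.
by case: (Hwf _ hr).
Qed.

Lemma S2v_alpha (W : Wfam ar) (B : Bfam ar) L s : arch_wf ar L -> (1 <= s)%N -> (s <= L.+1)%N ->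
  S2v (fun X => alphaTo W B s X).
Proof.
move=> Hwf; elim: s => [|s IH] h1 hL; first by [].
case: s IH h1 hL => [|s] IH h1 hL.
  apply: (@S2v_eqf R _ _ _ _ _ (fun X => X)).
    by move=> y.
  exact: S2v_id.
apply: (@S2v_eqf R _ _ _ _ _ (fun X => layer (W s.+1) (B s.+1) (alphaTo W B s.+1 X))).
  by move=> X; exact: alphaS.
apply: (@S2v_comp R _ _ _ _ _ _ (fun z => layer (W s.+1) (B s.+1) z)).
  have hr : (1 <= s.+1 <= L)%N by apply/andP; split; lia.
  by apply: S2v_layer_y; case: (Hwf _ hr).
by apply: IH => //; lia.
Qed.

Lemma updW_out (W : Wfam ar) t (w : Wsp ar t) s : t != s -> updW W w s = W s.
Proof. exact: dfwith_out. Qed.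

Lemma updW_in (W : Wfam ar) t (w : Wsp ar t) : updW W w t = w.
Proof. exact: dfwith_in. Qed.

Lemma updB_out (B : Bfam ar) t (b : Bsp ar t) s : t != s -> updB B b s = B s.
Proof. exact: dfwith_out. Qed.

Lemma updB_in (B : Bfam ar) t (b : Bsp ar t) : updB B b t = b.
Proof. exact: dfwith_in. Qed.

Lemma alpha_updW (W : Wfam ar) (B : Bfam ar) t (w : Wsp ar t) X s : (s <= t)%N ->
  alphaTo (updW W w) B s X = alphaTo W B s X.
Proof.
elim: s => [|s IH] hs; first by [].
case: s IH hs => [|s] IH hs; first by [].
rewrite (alphaS (updW W w) B s.+1 X (ltn0Sn s)) (alphaS W B s.+1 X (ltn0Sn s)) IH; last exact: ltnW.
rewrite updW_out; first by [].
by apply/eqP => E; move: hs; rewrite E ltnn.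
Qed.

Lemma alpha_updB (W : Wfam ar) (B : Bfam ar) t (b : Bsp ar t) X s : (s <= t)%N ->
  alphaTo W (updB B b) s X = alphaTo W B s X.
Proof.
elim: s => [|s IH] hs; first by [].
case: s IH hs => [|s] IH hs; first by [].
rewrite (alphaS W (updB B b) s.+1 X (ltn0Sn s)) (alphaS W B s.+1 X (ltn0Sn s)) IH; last exact: ltnW.
rewrite updB_out; first by [].
by apply/eqP => E; move: hs; rewrite E ltnn.
Qed.

Lemma omk_updW (W : Wfam ar) (B : Bfam ar) t (w : Wsp ar t) k (y : St ar t.+1) :
  omk (updW W w) B k y = omk W B k y.
Proof.
elim: k => [|k IH]; first by [].
rewrite /= IH updW_out; first by [].
apply/eqP => E; have : (t < k + t.+1)%N by lia.
by rewrite -E ltnn.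
Qed.

Lemma omk_updB (W : Wfam ar) (B : Bfam ar) t (b : Bsp ar t) k (y : St ar t.+1) :
  omk W (updB B b) k y = omk W B k y.
Proof.
elim: k => [|k IH]; first by [].
rewrite /= IH updB_out; first by [].
apply/eqP => E; have : (t < k + t.+1)%N by lia.
by rewrite -E ltnn.
Qed.

Lemma netF_updW (W : Wfam ar) (B : Bfam ar) L t (ht1 : (1 <= t)%N) (htL : (t <= L)%N) (w : Wsp ar t) X :
  netF (updW W w) B L X = @omega R ar W B L t.+1 htL (layer w (B t) (alphaTo W B t X)).
Proof.
rewrite (netF_dec _ _ _ _ ht1 htL) (alphaS (updW W w) B t X ht1) (alpha_updW W B t w X t (leqnn t)) updW_in.
by rewrite /omega omk_updW.
Qed.

Lemma netF_updB (W : Wfam ar) (B : Bfam ar) L t (ht1 : (1 <= t)%N) (htL : (t <= L)%N) (b : Bsp ar t) X :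
  netF W (updB B b) L X = @omega R ar W B L t.+1 htL (layer (W t) b (alphaTo W B t X)).
Proof.
rewrite (netF_dec _ _ _ _ ht1 htL) (alphaS W (updB B b) t X ht1) (alpha_updB W B t b X t (leqnn t)) updB_in.
by rewrite /omega omk_updB.
Qed.

End Net.


Theorem theorem11 (R : realType) (ar : arch R) (L : nat)
    (W : Wfam ar) (B : Bfam ar) (V X : St ar 1) (t : nat)
    (Hwf : arch_wf ar L) (ht1 : (1 <= t)%N) (htL : (t <= L)%N) :
  (forall Y : St ar L.+1,
     adj (fun u : Wsp ar t =>
            'D_u (fun w : Wsp ar t => 'D_V (netF (updW W w) B L) X) (W t)) Y
     = adj (fun u : Wsp ar t =>
              'D_u (fun w : Wsp ar t => layer w (B t) (alphaTo W B t X)) (W t))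
           (adj (fun e : St ar t.+1 =>
                   'D_('D_V (alphaTo W B t.+1) X)
                      (fun y : St ar t.+1 => 'D_e (@omega R ar W B L t.+1 htL) y)
                      (alphaTo W B t.+1 X)) Y)
       + adj (fun u : Wsp ar t =>
                'D_('D_V (alphaTo W B t) X)
                   (fun y : St ar t =>
                      'D_u (fun w : Wsp ar t => layer w (B t) y) (W t))
                   (alphaTo W B t X))
             (adj (fun e : St ar t.+1 =>
                     'D_e (@omega R ar W B L t.+1 htL) (alphaTo W B t.+1 X)) Y))
  /\
  (forall Y : St ar L.+1,
     adj (fun u : Bsp ar t =>
            'D_u (fun b : Bsp ar t => 'D_V (netF W (updB B b) L) X) (B t)) Y
     = adj (fun u : Bsp ar t =>
              'D_u (fun b : Bsp ar t => layer (W t) b (alphaTo W B t X)) (B t))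
           (adj (fun e : St ar t.+1 =>
                   'D_('D_V (alphaTo W B t.+1) X)
                      (fun y : St ar t.+1 => 'D_e (@omega R ar W B L t.+1 htL) y)
                      (alphaTo W B t.+1 X)) Y)
       + adj (fun u : Bsp ar t =>
                'D_('D_V (alphaTo W B t) X)
                   (fun y : St ar t =>
                      'D_u (fun b : Bsp ar t => layer (W t) b y) (B t))
                   (alphaTo W B t X))
             (adj (fun e : St ar t.+1 =>
                     'D_e (@omega R ar W B L t.+1 htL) (alphaTo W B t.+1 X)) Y)).
Proof.
have hr : (1 <= t <= L)%N by apply/andP; split.
have Hc : C2 (sig ar t) by case: (Hwf t hr).
have Som := @S2v_omega R ar W B L t htL Hwf.
have dal : forall x, differentiable (alphaTo W B t) x.
  move=> x; apply: S2v_diff; apply: (@S2v_alpha R ar W B L t Hwf ht1); exact: leqW.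
split => Y.
- apply: (@main_adj R _ _ _ _ _ _ _ _ _ _ (fun w y => layer w (B t) y)
     (@omega R ar W B L t.+1 htL) (alphaTo W B t) (@SJ_W R ar t (B t) Hc) Som dal
     (fun w => netF (updW W w) B L) (alphaTo W B t.+1) X V (W t) Y).
  + by move=> p X'; exact: netF_updW.
  + by move=> X'; exact: alphaS.
- apply: (@main_adj R _ _ _ _ _ _ _ _ _ _ (fun b y => layer (W t) b y)
     (@omega R ar W B L t.+1 htL) (alphaTo W B t) (@SJ_B R ar t (W t) Hc) Som dal
     (fun b => netF W (updB B b) L) (alphaTo W B t.+1) X V (B t) Y).
  + by move=> p X'; exact: netF_updB.
  + by move=> X'; exact: alphaS.
Qed.
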